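(* Consider the following transmitter-pulse/receiver selection setting. There are $I$ transmitters, each able to transmit $P$ pulses, and $R$ receivers. Let $\mathcal{P}=\{a_{i,p}: 1\le i\le I,\ 1\le p\le P\}$ be the set of all $IP$ transmitter-pulses, $\mathcal{R}=\{b_1,\dots,b_R\}$ the set of all receivers, and $\mathcal{U}=\mathcal{P}\cup\mathcal{R}$ the ground set. For every receiver $r$, transmitter $i$, pulse $p$ and sample index $n\in\{1,\dots,N\}$ let $\partial y_{r,i,p}[n]\in\mathbb{C}^4$ be the vector defined in the context below (for fixed values of the unknown parameters). For $\mathcal{S}\subseteq\mathcal{U}$ write $\mathcal{A}=\mathcal{S}\cap\mathcal{P}$, $\mathcal{B}=\mathcal{S}\cap\mathcal{R}$ and let $\mathcal{Y}(\mathcal{S})=\{(r,i,p): b_r\in\mathcal{B},\ a_{i,p}\in\mathcal{A}\}$ be the set of measurement indices generated by $\mathcal{S}$. Define the modified frame potential $$\tilde{\mathrm{FP}}(\mathcal{S})=\sum_{y,y'\in\mathcal{Y}(\mathcal{S})}\sum_{n=1}^N\left|\frac{\langle\partial y[n],\partial y'[n]\rangle}{\langle\partial y[n],\partial y[n]\rangle\,\langle\partial y'[n],\partial y'[n]\rangle}\right|^2,$$ where the sum runs over all ordered pairs $(y,y')$ of elements of $\mathcal{Y}(\mathcal{S})$ and $\langle\mathbf{a},\mathbf{b}\rangle=\mathbf{a}^H\mathbf{b}$, and define the set function $G:2^{\mathcal{U}}\to\mathbb{R}_+$ by $G(\mathcal{X})=\tilde{\mathrm{FP}}(\mathcal{U})-\tilde{\mathrm{FP}}(\mathcal{U}\setminus\mathcal{X})$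 for $\mathcal{X}\subseteq\mathcal{U}$. Then $G$ is normalized ($G(\emptyset)=0$), monotone (nondecreasing with respect to inclusion), and submodular, i.e. $G(\mathcal{S}_1\cup\{u\})-G(\mathcal{S}_1)\ge G(\mathcal{S}_2\cup\{u\})-G(\mathcal{S}_2)$ for all $\mathcal{S}_1\subseteq\mathcal{S}_2\subseteq\mathcal{U}$ and $u\in\mathcal{U}\setminus\mathcal{S}_2$.
   Context: Colocated MIMO radar model with two targets. Receiver $r$ is at position $d_r$ and transmitter $i$ at position $d_i$ on a line; $\lambda$ is the wavelength, $f_c$ the carrier frequency, $c$ the speed of light, $T_P$ the pulse repetition interval, $T_s$ the sampling period, $k$ the LFM chirp rate. Target $q\in\{1,2\}$ has complex amplitude $\alpha_q\neq 0$, range $R_q$, direction cosine $u_q$ and radial velocity $v_q$; these parameters are fixed. Let $h(t;v)=\exp(j4\pi v t/\lambda)$, $\beta_q(t)=\exp(j4\pi k t R_q/c)$, $\tau_{i,q,r}=c^{-1}[2R_q-(d_i+d_r)u_q]$, $\phi_{r,i}(u_q)=\exp(-j2\pi f_c\tau_{i,q,r})$, and $y^{(q)}_{r,i,p}[n]=\alpha_q h(pT_P+nT_s;v_q)\beta_q(nT_s)\phi_{r,i}(u_q)$. The noiseless measurement is $y_{r,i,p}[n]=y^{(1)}_{r,i,p}[n]+y^{(2)}_{r,i,p}[n]$, and its derivative with respect to $\boldsymbol\theta=[u_1,v_1,u_2,v_2]^T$ is $$\partial y_{r,i,p}[n]=\frac{j2\pi}{\lambda}\big((d_i+d_r)y^{(1)}_{r,i,p}[n],\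 2(nT_s+pT_P)y^{(1)}_{r,i,p}[n],\ (d_i+d_r)y^{(2)}_{r,i,p}[n],\ 2(nT_s+pT_P)y^{(2)}_{r,i,p}[n]\big)^T\in\mathbb{C}^4.$$ In the definition of $\tilde{\mathrm{FP}}$, $\partial y[n]$ denotes $\partial y_{r,i,p}[n]$ for the index $y=(r,i,p)$. *)

(* Defs.v *)
From mathcomp Require Import all_boot all_order all_algebra.
From mathcomp Require Import all_classical all_reals all_analysis.
From mathcomp Require Import complex.
Set Implicit Arguments. Unset Strict Implicit. Unset Printing Implicit Defensive.
Import Order.TTheory GRing.Theory Num.Theory.
Local Open Scope complex_scope.
Local Open Scope ring_scope.

(* Parameters of the colocated MIMO radar model with two targets.
   I transmitters, P pulses per transmitter, Rn receivers.
   Targets are indexed by bool: false = target 1, true = target 2. *)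
Record radar_params (R : realType) (I Rn : nat) := RadarParams {
  d_rx : 'I_Rn -> R;
  d_tx : 'I_I -> R;
  lambda : R;
  f_c : R;
  c_light : R;
  T_P : R;
  T_s : R;
  k_chirp : R;
  alpha : bool -> R[i];
  range : bool -> R;
  dircos : bool -> R;
  vel : bool -> R
}.

Section Model.
Variables (R : realType) (I P Rn N : nat) (prm : radar_params R I Rn).

Definition expj (theta : R) : R[i] := cos theta +i* sin theta.

Definition h_fun (t v : R) : R[i] := expj (4 * pi * v * t / lambda prm).
Definition beta_fun (q : bool) (t : R) : R[i] :=
  expj (4 * pi * k_chirp prm * t * range prm q / c_light prm).
Definition tau (i : 'I_I) (r : 'I_Rn) (q : bool) : R :=
  (2 * range prm q - (d_tx prm i + d_rx prm r) * dircos prm q) / c_light prm.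
Definition phi (r : 'I_Rn) (i : 'I_I) (q : bool) : R[i] :=
  expj (- (2 * pi * f_c prm * tau i r q)).

(* Indices are 0-based ordinals; the paper's 1-based pulse index p and sample
   index n correspond to p.+1 and n.+1. *)
Definition pulse_time (p : 'I_P) : R := (p.+1)%:R * T_P prm.
Definition sample_time (n : 'I_N) : R := (n.+1)%:R * T_s prm.

Definition ycomp (q : bool) (r : 'I_Rn) (i : 'I_I) (p : 'I_P) (n : 'I_N) : R[i] :=
  alpha prm q * h_fun (pulse_time p + sample_time n) (vel prm q)
  * beta_fun q (sample_time n) * phi r i q.

Definition meas := ('I_Rn * 'I_I * 'I_P)%type.

(* partial y_{r,i,p}[n] in C^4, derivative w.r.t. [u1; v1; u2; v2] *)
Definition dy (y : meas) (n : 'I_N) : 'cV[R[i]]_4 :=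
  let: (r, i, p) := y in
  let c := (2 * pi / lambda prm)%:C * 'i in
  let a := (d_tx prm i + d_rx prm r)%:C in
  let b := (2 * (sample_time n + pulse_time p))%:C in
  \col_(k < 4)
    (c * (if k == 0 :> nat then a * ycomp false r i p n
          else if k == 1 :> nat then b * ycomp false r i p n
          else if k == 2 :> nat then a * ycomp true r i p n
          else b * ycomp true r i p n)).

Definition cinner (a b : 'cV[R[i]]_4) : R[i] := \sum_(k < 4) (a k 0)^* * b k 0.

Definition sqmod (z : R[i]) : R := complex.Re z ^+ 2 + complex.Im z ^+ 2.

Definition ground := (('I_I * 'I_P) + 'I_Rn)%type.

Definition Yset (S : {set ground}) : {set meas} :=
  [set y : meas | (inr y.1.1 \in S) && (inl (y.1.2, y.2) \in S)].

Definition FPt (S : {set ground}) : R :=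
  \sum_(y in Yset S) \sum_(y' in Yset S) \sum_(n < N)
    sqmod (cinner (dy y n) (dy y' n) /
           (cinner (dy y n) (dy y n) * cinner (dy y' n) (dy y' n))).

Definition Gfun (X : {set ground}) : R := FPt [set: ground] - FPt (~: X).

End Model.

(* Main.v *)
Require Import Defs.
From mathcomp Require Import all_boot all_order all_algebra.
From mathcomp Require Import all_classical all_reals all_analysis.
From mathcomp Require Import complex.
Import Order.TTheory GRing.Theory Num.Theory.
Local Open Scope ring_scope.

Section Aux.
Variables (R : realType) (I P Rn N : nat) (prm : radar_params R I Rn).

Definition W (y y' : meas I P Rn) : R := \sum_(n < N)
    sqmod (cinner (dy prm y n) (dy prm y' n) /
           (cinner (dy prm y n) (dy prm y n) * cinner (dy prm y' n) (dy prm y' n))).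

Lemma W_ge0 (y y' : meas I P Rn) : 0 <= W y y'.
Proof. apply: sumr_ge0 => n _; rewrite /sqmod; apply: addr_ge0; exact: sqr_ge0. Qed.

Definition ind (S : {set ground I P Rn}) (y y' : meas I P Rn) : bool :=
  (y \in Yset S) && (y' \in Yset S).

Lemma FPtE (S : {set ground I P Rn}) : FPt N prm S = \sum_y \sum_y' (ind S y y')%:R * W y y'.
Proof.
rewrite /FPt big_mkcond; apply: eq_bigr => y _.
rewrite /ind; case: (y \in Yset S) => /=.
  rewrite big_mkcond; apply: eq_bigr => y' _.
  by case: (y' \in Yset S); rewrite ?mul1r ?mul0r.
by rewrite big1 // => y' _; rewrite mul0r.
Qed.

Lemma GE (X : {set ground I P Rn}) : Gfun N prm X =
  \sum_y \sum_y' ((ind [set: ground I P Rn] y y')%:R - (ind (~: X) y y')%:R) * W y y'.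
Proof.
rewrite /Gfun !FPtE -sumrB; apply: eq_bigr => y _.
rewrite -sumrB; apply: eq_bigr => y' _; by rewrite mulrBl.
Qed.

Lemma ind_sub (A B : {set ground I P Rn}) (y y' : meas I P Rn) : A \subset B -> ind A y y' ==> ind B y y'.
Proof.
move=> /fintype.subsetP sAB; apply/implyP; rewrite /ind !inE.
by case/andP => /andP [h1 h2] /andP [h3 h4]; rewrite !sAB.
Qed.

Lemma ind_U1 (u : ground I P Rn) (S : {set ground I P Rn}) (y y' : meas I P Rn) : ind (~: (u |: S)) y y' =
  ind (~: S) y y' && ~~ [|| inr y.1.1 == u, inl (y.1.2, y.2) == u,
                           inr y'.1.1 == u | inl (y'.1.2, y'.2) == u].
Proof.
rewrite /ind !inE.
case: (inr y.1.1 == u); case: (inl (y.1.2, y.2) == u);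
case: (inr y'.1.1 == u); case: (inl (y'.1.2, y'.2) == u);
case: (inr y.1.1 \in S); case: (inl (y.1.2, y.2) \in S);
case: (inr y'.1.1 \in S); case: (inl (y'.1.2, y'.2) \in S) => //.
Qed.

Lemma boolle (a b : bool) : a ==> b -> (a%:R : R) <= b%:R.
Proof. by case: a; case: b. Qed.

Lemma keyb (A1 A2 c : bool) : A2 ==> A1 ->
  (A2%:R - (A2 && c)%:R : R) <= A1%:R - (A1 && c)%:R.
Proof. by case: A1; case: A2; case: c; rewrite //= ?subrr ?subr0. Qed.

Lemma Gdiff (u : ground I P Rn) (S : {set ground I P Rn}) : Gfun N prm (u |: S) - Gfun N prm S =
  \sum_y \sum_y' ((ind (~: S) y y')%:R - (ind (~: (u |: S)) y y')%:R) * W y y'.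
Proof.
rewrite !GE -sumrB; apply: eq_bigr => y _.
rewrite -sumrB; apply: eq_bigr => y' _; rewrite -mulrBl; congr (_ * _).
by rewrite opprB addrC addrA subrK.
Qed.

End Aux.

Theorem theorem1 (R : realType) (I P Rn N : nat) (prm : radar_params R I Rn)
  (halpha1 : alpha prm false != 0) (halpha2 : alpha prm true != 0) :
  let G := @Gfun R I P Rn N prm in
  [/\ G (finset.set0 : {set ground I P Rn}) = 0,
      (forall X Y : {set ground I P Rn}, X \subset Y -> G X <= G Y)
    & (forall (S1 S2 : {set ground I P Rn}) (u : ground I P Rn),
         S1 \subset S2 -> u \notin S2 ->
         G (u |: S2) - G S2 <= G (u |: S1) - G S1)].
Proof.
move=> G; split.
- by rewrite /G /Gfun finset.setC0 subrr.
- move=> X Y sXY; rewrite /G !GE.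
  apply: ler_sum => y _; apply: ler_sum => y' _.
  apply: ler_wpM2r; first exact: W_ge0.
  rewrite lerD2l lerN2.
  have sC : ~: Y \subset ~: X by rewrite finset.setCS.
  apply: boolle; exact: (@ind_sub I P Rn _ _ y y' sC).
- move=> S1 S2 u s12 _; rewrite /G !Gdiff.
  apply: ler_sum => y _; apply: ler_sum => y' _.
  apply: ler_wpM2r; first exact: W_ge0.
  rewrite !ind_U1; apply: keyb.
  by apply: ind_sub; rewrite finset.setCS.
Qed.
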